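(* Let $\theta\in(0,\pi)$, $1\le k\le n-1$, $f$ a positive smooth function on $\mathcal{C}_\theta$, and $h$ a positive admissible solution of $$\frac{\sigma_n(\nabla^2h+h\sigma)}{\sigma_{n-k}(\nabla^2h+h\sigma)}=f^{-1}\ \text{in }\mathcal{C}_\theta,\qquad \nabla_\mu h=\cot\theta\, h\ \text{on }\partial\mathcal{C}_\theta.$$ Then $\max_{\mathcal{C}_\theta}|\nabla h|\le(1+\cot^2\theta)^{1/2}\|h\|_{C^0(\mathcal{C}_\theta)}$.
   Context: $e=-E_{n+1}$, $\mathcal{C}_\theta=\{\xi\in\overline{\mathbb{R}^{n+1}_+}: |\xi-\cos\theta\,e|=1\}$ with round metric $\sigma$, gradient $\nabla$, Hessian $\nabla^2$; $\mu$ is the outward unit co-normal of $\partial\mathcal{C}_\theta$. $\sigma_m(A)$ is the $m$-th elementary symmetric function of the eigenvalues of $A$ w.r.t. $\sigma$. $h$ is admissible if $\nabla^2h+h\sigma$ is positive definite. *)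

(* Defs.v *)
From HB Require Import structures.
From mathcomp Require Import all_boot all_order all_algebra.
From mathcomp Require Import all_classical all_reals all_analysis.
Set Implicit Arguments. Unset Strict Implicit. Unset Printing Implicit Defensive.
Import Order.TTheory GRing.Theory Num.Theory.
Import numFieldNormedType.Exports.
Local Open Scope classical_set_scope.
Local Open Scope ring_scope.

Section CapDefs.
Variable R : realType.
Variable n : nat.
Notation V := 'rV[R]_n.+1.

Definition dotv (u v : V) : R := (u *m v^T) 0 0.
Definition enorm (u : V) : R := Num.sqrt (dotv u u).

Definition Ebasis (i : 'I_n.+1) : V := delta_mx 0 i.
Definition evec : V := - Ebasis ord_max.

Definition capC (theta : R) : set V :=
  [set x : V | 0 <= x 0 ord_max /\ enorm (x - cos theta *: evec) = 1].
Definition bdryC (theta : R) : set V :=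
  [set x : V | x 0 ord_max = 0 /\ enorm (x - cos theta *: evec) = 1].

(* unit outward normal of the unit sphere centered at cos(theta) e *)
Definition nu (theta : R) (x : V) : V := x - cos theta *: evec.
Definition tproj (theta : R) (x : V) : 'M[R]_n.+1 :=
  1%:M - (nu theta x)^T *m nu theta x.

Definition Dgrad (h : V -> R) (x : V) : V := \row_i ('D_(Ebasis i) h x).
Definition Dhess (h : V -> R) (x : V) : 'M[R]_n.+1 :=
  \matrix_(i, j) ('D_(Ebasis j) ('D_(Ebasis i) h) x).

(* spherical gradient  \nabla h  (tangential part of the Euclidean gradient) *)
Definition sgrad (theta : R) (h : V -> R) (x : V) : V :=
  Dgrad h x *m tproj theta x.

(* matrix of the tensor  \nabla^2 h + h sigma  on the tangent space
   (extended by 0 in the normal direction): on the unit sphere,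
   \nabla^2 h(X,Y) = D^2 h(X,Y) - (Dh . nu) <X,Y> for tangent X, Y *)
Definition Amat (theta : R) (h : V -> R) (x : V) : 'M[R]_n.+1 :=
  tproj theta x *m
  (Dhess h x - (dotv (Dgrad h x) (nu theta x) - h x) *: 1%:M)
  *m tproj theta x.

(* m-th elementary symmetric function of the eigenvalues of a square matrix
   (via the characteristic polynomial) *)
Definition sigma_m (m : nat) (A : 'M[R]_n.+1) : R :=
  (-1) ^+ m * (char_poly A)`_(n.+1 - m).

(* outward unit co-normal of the boundary of the cap (tangent to the sphere,
   normal to the boundary, pointing out of the cap): normalized tangential
   projection of e = -E_{n+1} *)
Definition conormal (theta : R) (x : V) : V :=
  let w := evec *m tproj theta x in (enorm w)^-1 *: w.

Definition iterD (vs : seq V) (f : V -> R) : V -> R :=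
  foldr (fun v g => 'D_v g) f vs.
Definition smooth (f : V -> R) : Prop :=
  forall vs : seq V, continuous (iterD vs f) /\
    (forall (v x : V), derivable (iterD vs f) x v).

Definition admissible (theta : R) (h : V -> R) : Prop :=
  forall x, capC theta x -> forall X : V,
    dotv X (nu theta x) = 0 -> X != 0 -> 0 < dotv (X *m Amat theta h x) X.

Definition cot (theta : R) : R := cos theta / sin theta.
End CapDefs.

(* Main.v *)
Require Import Defs.
From HB Require Import structures.
From mathcomp Require Import all_boot all_order all_algebra.
From mathcomp Require Import all_classical all_reals all_analysis.
Import Order.TTheory GRing.Theory Num.Theory.
Import numFieldNormedType.Exports.
Local Open Scope classical_set_scope.
Local Open Scope ring_scope.
From mathcomp Require Import ring lra.

Set Implicit Arguments. Unset Strict Implicit. Unset Printing Implicit Defensive.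

Section P2.
Variables (R : realType) (n : nat).
Local Notation V := 'rV[R]_n.+1.
Local Notation E := (@Ebasis R n).

Lemma mvt1 (phi dphi : R -> R) (v : R) :
  (forall s, is_derive (s : R) (1 : R) phi (dphi s)) -> continuous phi ->
  exists s, `|s| <= `|v| /\ phi v - phi 0 = dphi s * v.
Proof.
move=> hd hc.
have cw : forall a b : R, {within `[a, b], continuous phi}.
  by move=> a b; apply: continuous_subspaceT.
case: (leP 0 v) => hv.
  have [c /andP[] hc0 hcv E] := MVT_segment hv (fun x _ => hd x) (cw 0 v).
  exists c; split; last by rewrite E subr0.
  by rewrite ger0_norm ?ger0_norm ?(ltW hv) // (le_trans _ hc0).
have [c hc1 E] := MVT_segment (ltW hv) (fun x _ => hd x) (cw v 0).
move: hc1; rewrite in_itv /= => /andP[hvc hc0].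
exists c; split.
  by rewrite ler0_norm // ler0_norm ?(ltW hv) // lerN2.
by rewrite -opprB E sub0r mulrN opprK.
Qed.


Lemma coord_le (v : V) j : `|v 0 j| <= `|v|.
Proof.
rewrite [leRHS]/Num.Def.normr /= mx_normrE; apply/bigmax_geP; right => /=.
by exists (0, j).
Qed.

Lemma norm_le_coord (v : V) e : 0 <= e -> (forall j, `|v 0 j| <= e) -> `|v| <= e.
Proof.
move=> e0 h; rewrite /Num.Def.normr /= mx_normrE; apply: bigmax_le => // -[i j] _ /=.
by rewrite (ord1 i).
Qed.

Lemma line_derive (g : V -> R) (q e : V) (s : R) :
  derivable g (q + s *: e) e ->
  is_derive (s : R) (1 : R) (fun t => g (q + t *: e)) ('D_e g (q + s *: e)).
Proof.
move=> hd.
have eq : (fun h : R => h^-1 *: (((fun t => g (q + t *: e)) \o shift s) (h *: 1)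
              - (fun t => g (q + t *: e)) s))
  = (fun h : R => h^-1 *: ((g \o shift (q + s *: e)) (h *: e) - g (q + s *: e))).
  apply/funext => h /=.
  by rewrite scaler1 scalerDl addrCA addrC.
split; first by rewrite /derivable eq.
by rewrite /derive eq.
Qed.


Lemma cont_sum (T : topologicalType) m (F : 'I_m -> T -> R) :
  (forall i, continuous (F i)) -> continuous (fun y => \sum_i F i y).
Proof.
elim: m F => [|m IH] F hF.
  have -> : (fun y => \sum_(i < 0) F i y) = fun=> 0.
    by apply/funext => y; rewrite big_ord0.
  exact: cst_continuous.
have -> : (fun y => \sum_(i < m.+1) F i y) =
   (fun y => \sum_(i < m) F (widen_ord (leqnSn m) i) y + F ord_max y).
  by apply/funext => y; rewrite big_ord_recr.
move=> y; apply: continuousD; last exact: hF.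
exact: (IH (fun i => F (widen_ord (leqnSn m) i))).
Qed.

Lemma C1diff (g : V -> R) (x : V) :
  (forall j, continuous ('D_(E j) g)) -> (forall y j, derivable g y (E j)) ->
  continuous g -> differentiable g x.
Proof.
move=> hc hd gc.
pose L := fun v : V => \sum_j v 0 j * 'D_(E j) g x.
have Llin : linear L.
  move=> a u v; rewrite /L scaler_sumr -big_split /=; apply: eq_bigr => j _.
  by rewrite !mxE mulrDl -mulrA.
pose LM := GRing.isLinear.Build _ _ _ _ L Llin.
pose LL : {linear V -> R} := HB.pack L LM.
have Lc : continuous LL.
  apply: (@cont_sum _ _ (fun j (v : V) => v 0 j * 'D_(E j) g x)) => j y.
  apply: (@continuousM _ _ (fun v : V => v 0 j) (fun=> 'D_(E j) g x)).
    exact: coord_continuous.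
  exact: cst_continuous.
apply/diff_locallyP.
have hE := @diff_unique R V R g LL x Lc.
suff Lo : g \o shift x = cst (g x) + (LL : V -> R) +o_ (0 : V) (@id V).
  by rewrite (hE Lo); split.
apply/eqaddoP => eps eps0.
set e' := eps / n.+1%:R.
have e'0 : 0 < e' by rewrite divr_gt0 // ltr0n.
have hnear : \forall y \near x, forall j, `|'D_(E j) g y - 'D_(E j) g x| <= e'.
  have := @filter_forall V _ (fun j y => `|'D_(E j) g y - 'D_(E j) g x| <= e') (nbhs x) _.
  move=> H; apply: H => j.
  have /cvgrPdist_le /(_ e' e'0) := hc j x.
  by apply: filterS => y; rewrite distrC.
move/nbhs_ballP: hnear => [d /= d0 hd'].
apply/nbhs_ballP; exists d => // v.
rewrite -ball_normE /= sub0r normrN => vd.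
pose q (k : nat) : V := x + \row_j (if (j < k)%N then v 0 j else 0).
have q0 : q 0%N = x.
  rewrite /q; have -> : \row_j (if (j < 0)%N then v 0 j else 0) = 0 :> V.
    by apply/rowP => j; rewrite !mxE.
  by rewrite addr0.
have qN : q n.+1 = x + v.
  by rewrite /q; congr (_ + _); apply/rowP => j; rewrite !mxE ltn_ord.
have qS : forall k : 'I_n.+1, q k.+1 = q k + v 0 k *: E k.
  move=> k; rewrite /q -addrA; congr (_ + _); apply/rowP => j; rewrite !mxE /=.
  case: (eqVneq j k) => [->|njk]; first by rewrite ltnSn ltnn add0r mulr1.
  have njk' : (nat_of_ord j == nat_of_ord k) = false by apply/negbTE.
  by rewrite mulr0 addr0 ltnS leq_eqVlt njk'.
have step : forall k : 'I_n.+1,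
    `|g (q k.+1) - g (q k) - v 0 k * 'D_(E k) g x| <= e' * `|v|.
  move=> k.
  have hder : forall s, is_derive (s : R) (1 : R) (fun t => g (q k + t *: E k))
                          ('D_(E k) g (q k + s *: E k)).
    by move=> s; apply: line_derive; apply: hd.
  have hcont : continuous (fun t : R => g (q k + t *: E k)).
    move=> t; apply: (@continuous_comp _ _ _ (fun t : R => q k + t *: E k) g).
      apply: continuousD; first exact: cst_continuous.
      exact: scalel_continuous.
    exact: gc.
  have [s [hs hm]] := @mvt1 (fun t => g (q k + t *: E k))
     (fun t => 'D_(E k) g (q k + t *: E k)) (v 0 k) hder hcont.
  move: hm; rewrite /= scale0r addr0 -qS => ->.
  rewrite [v 0 k * _]mulrC -mulrBl normrM.
  apply: ler_pM => //.
    apply: hd'; rewrite -ball_normE /= /q -addrA opprD addrA subrr add0r normrN.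
    apply: le_lt_trans vd; apply: norm_le_coord => // j.
    rewrite !mxE /=; case: (eqVneq j k) => [->|njk].
      by rewrite ltnn add0r mulr1 (le_trans hs (coord_le _ _)).
    rewrite mulr0 addr0; case: ifP => _; first exact: coord_le.
    by rewrite normr0.
  exact: coord_le.
have -> : (g \o shift x - (cst (g x) + LL)) v =
    \sum_(k < n.+1) (g (q k.+1) - g (q k) - v 0 k * 'D_(E k) g x).
  rewrite sumrB -(big_mkord xpredT (fun k => g (q k.+1) - g (q k))).
  rewrite telescope_sumr // qN q0 /=.
  by rewrite !fctE /= [v + x]addrC opprD addrA.
apply: le_trans (ler_norm_sum _ _ _) _.
apply: le_trans (ler_sum _ (fun k _ => step k)) _.
by rewrite sumr_const card_ord /e' -mulrnAl -mulr_natr divfK // pnatr_eq0.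
Qed.


Lemma chain (g : V -> R) (gam : R -> V) (t : R) (w : V) :
  (forall j, continuous ('D_(E j) g)) -> (forall y j, derivable g y (E j)) ->
  continuous g ->
  (forall j, is_derive (t : R) (1 : R) (fun s => gam s 0 j) (w 0 j)) ->
  is_derive (t : R) (1 : R) (g \o gam) (\sum_j 'D_(E j) g (gam t) * w 0 j).
Proof.
move=> hc hd gc hw.
have dg : derivable gam t 1.
  by apply/derivable_mxP => i j; rewrite (ord1 i); case: (hw j).
have Dg : 'D_1 gam t = w.
  rewrite derive_mx //; apply/rowP => j; rewrite mxE.
  by case: (hw j).
have dgam : differentiable gam t by apply/derivable1_diffP.
have dG : differentiable g (gam t) by apply: C1diff.
have dc : differentiable (g \o gam) t by apply: differentiable_comp.
split; first exact/derivable1_diffP.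
rewrite deriveE // diff_comp // /=.
have -> : 'd gam t 1 = w by rewrite -deriveE.
rewrite {1}(row_sum_delta w) linear_sum; apply: eq_bigr => j _.
by rewrite linearZ /= -deriveE // mulrC.
Qed.

End P2.


Set Implicit Arguments. Unset Strict Implicit. Unset Printing Implicit Defensive.

Section P3.
Variables (R : realType) (n : nat) (theta : R) (h : 'rV[R]_n.+1 -> R).
Local Notation V := 'rV[R]_n.+1.
Local Notation E := (@Ebasis R n).
Local Notation co := (cos theta).
Local Notation nuv := (@nu R n theta).
Local Notation ev := (@evec R n).

Lemma dotvE (u v : V) : dotv u v = \sum_i u 0 i * v 0 i.
Proof. by rewrite /dotv !mxE; apply: eq_bigr => i _; rewrite mxE. Qed.

Lemma dotvC (u v : V) : dotv u v = dotv v u.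
Proof. by rewrite !dotvE; apply: eq_bigr => i _; rewrite mulrC. Qed.

Lemma dotvDl (u v w : V) : dotv (u + v) w = dotv u w + dotv v w.
Proof. by rewrite !dotvE -big_split; apply: eq_bigr => i _; rewrite mxE mulrDl. Qed.

Lemma dotvZl a (u w : V) : dotv (a *: u) w = a * dotv u w.
Proof. by rewrite !dotvE mulr_sumr; apply: eq_bigr => i _; rewrite mxE mulrA. Qed.

Lemma dotvNl (u w : V) : dotv (- u) w = - dotv u w.
Proof. by rewrite -scaleN1r dotvZl mulN1r. Qed.

Lemma dotvBl (u v w : V) : dotv (u - v) w = dotv u w - dotv v w.
Proof. by rewrite dotvDl dotvNl. Qed.

Lemma dotvDr (u v w : V) : dotv w (u + v) = dotv w u + dotv w v.
Proof. by rewrite dotvC dotvDl !(dotvC w). Qed.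

Lemma dotvZr a (u w : V) : dotv w (a *: u) = a * dotv w u.
Proof. by rewrite dotvC dotvZl dotvC. Qed.

Lemma dotvBr (u v w : V) : dotv w (u - v) = dotv w u - dotv w v.
Proof. by rewrite dotvC dotvBl !(dotvC w). Qed.

Lemma dotv0l (w : V) : dotv 0 w = 0.
Proof. by rewrite -(scale0r 0) dotvZl mul0r. Qed.

Lemma dotv_ge0 (u : V) : 0 <= dotv u u.
Proof. by rewrite dotvE sumr_ge0 // => i _; rewrite -expr2 sqr_ge0. Qed.

Lemma dotv_eq0 (u : V) : dotv u u = 0 -> u = 0.
Proof.
rewrite dotvE => /eqP; rewrite psumr_eq0 => [/allP H|i _]; last by rewrite -expr2 sqr_ge0.
apply/rowP => j; rewrite mxE; have /implyP := H j (mem_index_enum j).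
by rewrite -expr2 sqrf_eq0 => /(_ isT) /eqP.
Qed.

Lemma evecE j : (@evec R n) 0 j = - (j == ord_max)%:R.
Proof. by rewrite /evec /Ebasis !mxE eqxx. Qed.

Lemma dotv_evec (u : V) : dotv u ev = - u 0 ord_max.
Proof.
rewrite dotvE (bigD1 ord_max) //= big1 => [|j /negbTE nj]; last by rewrite evecE nj oppr0 mulr0.
by rewrite evecE eqxx mulrN1 addr0.
Qed.

Lemma dotv_evec_evec : dotv ev ev = 1.
Proof. by rewrite dotv_evec evecE eqxx opprK. Qed.

Lemma enorm1 (u : V) : enorm u = 1 -> dotv u u = 1.
Proof. by move=> H; rewrite -(sqr_sqrtr (dotv_ge0 u)) -/(enorm u) H expr1n. Qed.

Lemma enorm_sqr (u : V) : enorm u ^+ 2 = dotv u u.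
Proof. by rewrite sqr_sqrtr // dotv_ge0. Qed.

Lemma tprojE (u y : V) : u *m tproj theta y = u - dotv u (nuv y) *: nuv y.
Proof.
rewrite /tproj mulmxBr mulmx1 mulmxA [u *m _^T]mx11_scalar mul_scalar_mx.
by [].
Qed.

Lemma tprojT (y : V) : (tproj theta y)^T = tproj theta y.
Proof. by rewrite /tproj linearB /= trmx1 trmx_mul trmxK. Qed.

Definition Bf (y u w : V) : R :=
  \sum_i u 0 i * \sum_j 'D_(E j) ('D_(E i) h) y * w 0 j.

Lemma dotv_hess (y u w : V) : dotv (u *m Dhess h y) w = Bf y u w.
Proof.
rewrite dotvE /Bf.
under eq_bigr do rewrite mxE mulr_suml.
rewrite exchange_big /=; apply: eq_bigr => i _; rewrite mulr_sumr.
by apply: eq_bigr => j _; rewrite mxE mulrA.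
Qed.

Lemma AmatE (y X : V) : dotv X (nuv y) = 0 ->
  dotv (X *m Amat theta h y) X =
  Bf y X X - (dotv (Dgrad h y) (nuv y) - h y) * dotv X X.
Proof.
move=> hX0.
have hX : X *m tproj theta y = X by rewrite tprojE hX0 scale0r subr0.
have hXT : tproj theta y *m X^T = X^T by rewrite -{1}tprojT -trmx_mul hX.
pose M := Dhess h y - (dotv (Dgrad h y) (nuv y) - h y) *: (1%:M : 'M[R]_n.+1).
have -> : dotv (X *m Amat theta h y) X = dotv (X *m M) X.
  by rewrite /dotv /Amat !mulmxA hX -(mulmxA _ (tproj theta y)) hXT.
by rewrite /M mulmxBr -scalemxAr mulmx1 dotvBl dotvZl dotv_hess.
Qed.

Lemma BfDl (y u v w : V) : Bf y (u + v) w = Bf y u w + Bf y v w.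
Proof. by rewrite /Bf -big_split; apply: eq_bigr => i _; rewrite mxE mulrDl. Qed.

Lemma BfZl a (y u w : V) : Bf y (a *: u) w = a * Bf y u w.
Proof. by rewrite /Bf mulr_sumr; apply: eq_bigr => i _; rewrite mxE mulrA. Qed.

Lemma BfBl (y u v w : V) : Bf y (u - v) w = Bf y u w - Bf y v w.
Proof. by rewrite BfDl -scaleN1r BfZl mulN1r. Qed.

Lemma BfZr a (y u w : V) : Bf y u (a *: w) = a * Bf y u w.
Proof.
rewrite /Bf mulr_sumr; apply: eq_bigr => i _; rewrite mulrCA; congr (_ * _).
by rewrite mulr_sumr; apply: eq_bigr => j _; rewrite mxE mulrCA.
Qed.

End P3.


Set Implicit Arguments. Unset Strict Implicit. Unset Printing Implicit Defensive.

Section D1.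
Variable R : realType.

Lemma dD (f g : R -> R) t a b : is_derive (t : R) (1 : R) f a -> is_derive t 1 g b ->
  is_derive t 1 (fun s => f s + g s) (a + b).
Proof. by move=> ha hb; have := is_deriveD ha hb. Qed.

Lemma dB (f g : R -> R) t a b : is_derive (t : R) (1 : R) f a -> is_derive t 1 g b ->
  is_derive t 1 (fun s => f s - g s) (a - b).
Proof. by move=> ha hb; have := is_deriveB ha hb. Qed.

Lemma dM (f g : R -> R) t a b : is_derive (t : R) (1 : R) f a -> is_derive t 1 g b ->
  is_derive t 1 (fun s => f s * g s) (f t * b + g t * a).
Proof. by move=> ha hb; have := is_deriveM ha hb. Qed.

Lemma dC (c : R) t : is_derive (t : R) (1 : R) (fun _ => c) 0.
Proof. exact: is_derive_cst. Qed.

Lemma dsum m (f : 'I_m -> R -> R) (a : 'I_m -> R) t :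
  (forall i, is_derive (t : R) (1 : R) (f i) (a i)) ->
  is_derive t 1 (fun s => \sum_i f i s) (\sum_i a i).
Proof.
elim: m f a => [|m IH] f a hf.
  have -> : (fun s => \sum_(i < 0) f i s) = fun _ => 0.
    by apply/funext => s; rewrite big_ord0.
  by rewrite big_ord0; exact: dC.
have -> : (fun s => \sum_(i < m.+1) f i s) =
   (fun s => \sum_(i < m) f (widen_ord (leqnSn m) i) s + f ord_max s).
  by apply/funext => s; rewrite big_ord_recr.
rewrite big_ord_recr.
exact: (dD (IH (fun i => f (widen_ord (leqnSn m) i)) _ (fun i => hf _)) (hf ord_max)).
Qed.

Lemma fermat (phi : R -> R) (d : R) : (forall t, derivable phi t 1) ->
  is_derive (0 : R) (1 : R) phi d -> (\forall t \near 0, phi t <= phi 0) -> d = 0.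
Proof.
move=> hder hd /nbhs_ballP [r /= r0 hr].
have hm : is_derive (0 : R) (1 : R) phi 0.
  apply: (@derive1_at_max _ phi (- r) r 0).
  - by rewrite ge0_cp // ltW.
  - by move=> t _; exact: hder.
  - by rewrite in_itv /= oppr_lt0 r0.
  move=> t; rewrite in_itv /= => /andP[h1 h2]; apply: hr.
  by rewrite -ball_normE /= sub0r normrN ltr_norml h1 h2.
by rewrite -(@derive_val _ _ _ _ _ _ _ hd) (@derive_val _ _ _ _ _ _ _ hm).
Qed.

End D1.

Unset Implicit Arguments.
Section QD.
Variables (R : realType) (n : nat) (theta : R) (h : 'rV[R]_n.+1 -> R).
Local Notation V := 'rV[R]_n.+1.
Local Notation E := (@Ebasis R n).
Local Notation co := (cos theta).
Local Notation nuv := (@nu R n theta).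
Local Notation ev := (@evec R n).
Hypothesis hc0 : continuous h.
Hypothesis hc1 : forall j, continuous ('D_(E j) h).
Hypothesis hd0 : forall y j, derivable h y (E j).
Hypothesis hc2 : forall i j, continuous ('D_(E j) ('D_(E i) h)).
Hypothesis hd1 : forall i y j, derivable ('D_(E i) h) y (E j).

Definition dn (y : V) := dotv (Dgrad h y) (nuv y).
Definition Qf (y : V) := dotv (Dgrad h y) (Dgrad h y) - dn y ^+ 2 + h y ^+ 2.
Definition gf (y : V) := Dgrad h y - dn y *: nuv y.

Lemma Dgrad_coord (y : V) j : Dgrad h y 0 j = 'D_(E j) h y.
Proof. by rewrite mxE. Qed.

Lemma nu_coord (y : V) j : nuv y 0 j = y 0 j - co * ev 0 j.
Proof. by rewrite /nu !mxE. Qed.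

Lemma Qder (gam : R -> V) (t : R) (w : V) :
  (forall j, is_derive (t : R) (1 : R) (fun s => gam s 0 j) (w 0 j)) ->
  is_derive t 1 (Qf \o gam)
    (2 * (Bf h (gam t) (gf (gam t)) w - (dn (gam t) - h (gam t)) * dotv (Dgrad h (gam t)) w)).
Proof.
move=> hw; set y := gam t.
have ha : forall i, is_derive t 1 (fun s => 'D_(E i) h (gam s))
    (\sum_j 'D_(E j) ('D_(E i) h) y * w 0 j).
  by move=> i; have := @chain R n ('D_(E i) h) gam t w (hc2 i) (hd1 i) (hc1 i) hw.
have hb : forall i, is_derive t 1 (fun s => nuv (gam s) 0 i) (w 0 i).
  move=> i; have -> : (fun s => nuv (gam s) 0 i) = fun s => gam s 0 i - co * ev 0 i.
    by apply/funext => s; rewrite nu_coord.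
  by rewrite -[w 0 i]subr0; apply: dB => //; exact: dC.
have hcc : is_derive t 1 (fun s => h (gam s)) (dotv (Dgrad h y) w).
  apply: is_derive_eq (@chain R n h gam t w hc1 hd0 hc0 hw) _.
  by rewrite dotvE; apply: eq_bigr => j _; rewrite mxE.
have -> : Qf \o gam = fun s =>
    (\sum_i 'D_(E i) h (gam s) * 'D_(E i) h (gam s))
    - (\sum_i 'D_(E i) h (gam s) * nuv (gam s) 0 i) *
      (\sum_i 'D_(E i) h (gam s) * nuv (gam s) 0 i)
    + h (gam s) * h (gam s).
  apply/funext => s; rewrite /= /Qf /dn !dotvE !expr2.
  by congr (_ - (_ * _) + _); apply: eq_bigr => i _; rewrite !mxE.
apply: is_derive_eq.
  exact: (dD (dB (dsum (fun i => dM (ha i) (ha i)))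
     (dM (dsum (fun i => dM (ha i) (hb i))) (dsum (fun i => dM (ha i) (hb i)))))
     (dM hcc hcc)).
rewrite /= /gf BfBl BfZl.
have e1 : Bf h y (Dgrad h y) w =
    \sum_i 'D_(E i) h y * \sum_j 'D_(E j) ('D_(E i) h) y * w 0 j.
  by apply: eq_bigr => i _; rewrite Dgrad_coord.
have e3 : dn y = \sum_i 'D_(E i) h y * nuv y 0 i.
  by rewrite /dn dotvE; apply: eq_bigr => i _; rewrite Dgrad_coord.
have e4 : dotv (Dgrad h y) w = \sum_i 'D_(E i) h y * w 0 i.
  by rewrite dotvE; apply: eq_bigr => i _; rewrite Dgrad_coord.
rewrite e1 e3 e4 !big_split /= /Bf.
ring.
Qed.

Lemma der_a (gam : R -> V) (t : R) (w : V) :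
  (forall j, is_derive (t : R) (1 : R) (fun s => gam s 0 j) (w 0 j)) ->
  forall i, is_derive t 1 (fun s => 'D_(E i) h (gam s))
    (\sum_j 'D_(E j) ('D_(E i) h) (gam t) * w 0 j).
Proof. by move=> hw i; have := @chain R n ('D_(E i) h) gam t w (hc2 i) (hd1 i) (hc1 i) hw. Qed.

Lemma der_b (gam : R -> V) (t : R) (w : V) :
  (forall j, is_derive (t : R) (1 : R) (fun s => gam s 0 j) (w 0 j)) ->
  forall i, is_derive t 1 (fun s => nuv (gam s) 0 i) (w 0 i).
Proof.
move=> hw i; have -> : (fun s => nuv (gam s) 0 i) = fun s => gam s 0 i - co * ev 0 i.
  by apply/funext => s; rewrite nu_coord.
by rewrite -[w 0 i]subr0; apply: dB => //; exact: dC.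
Qed.

Lemma der_c (gam : R -> V) (t : R) (w : V) :
  (forall j, is_derive (t : R) (1 : R) (fun s => gam s 0 j) (w 0 j)) ->
  is_derive t 1 (fun s => h (gam s)) (dotv (Dgrad h (gam t)) w).
Proof.
move=> hw; apply: is_derive_eq (@chain R n h gam t w hc1 hd0 hc0 hw) _.
by rewrite dotvE; apply: eq_bigr => j _; rewrite mxE.
Qed.

Lemma bcder (gam : R -> V) (t : R) (w : V) :
  (forall j, is_derive (t : R) (1 : R) (fun s => gam s 0 j) (w 0 j)) ->
  is_derive t 1 (fun s => dotv (ev + co *: nuv (gam s)) (Dgrad h (gam s)) - co * h (gam s))
    (Bf h (gam t) (ev + co *: nuv (gam t)) w).
Proof.
move=> hw.
have ha := der_a gam t w hw; have hb := der_b gam t w hw; have hcc := der_c gam t w hw.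
have -> : (fun s => dotv (ev + co *: nuv (gam s)) (Dgrad h (gam s)) - co * h (gam s)) =
   fun s => \sum_i (ev 0 i + co * nuv (gam s) 0 i) * 'D_(E i) h (gam s) - co * h (gam s).
  apply/funext => s; rewrite dotvE; congr (_ - _).
  by apply: eq_bigr => i _; rewrite !mxE.
apply: is_derive_eq.
  exact: (dB (dsum (fun i => dM (dD (dC (ev 0 i) t) (dM (dC co t) (hb i))) (ha i)))
             (dM (dC co t) hcc)).
rewrite /= /Bf.
have e4 : dotv (Dgrad h (gam t)) w = \sum_i 'D_(E i) h (gam t) * w 0 i.
  by rewrite dotvE; apply: eq_bigr => i _; rewrite Dgrad_coord.
rewrite e4 !big_split /= mulr_sumr.
have -> : \sum_i 'D_(E i) h (gam t) * (0 + (co * w 0 i + nuv (gam t) 0 i * 0)) =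
   \sum_i co * ('D_(E i) h (gam t) * w 0 i).
  by apply: eq_bigr => i _; ring.
rewrite mulr0 addr0 addrK; apply: eq_bigr => i _; congr (_ * _).
rewrite [in RHS]mxE; congr (_ + _).
by rewrite [in RHS]mxE.
Qed.

Definition curve (p u X : V) (s : R) : V := p + (cos s - 1) *: u + sin s *: X.
Definition wcur (u X : V) (t : R) : V := (- sin t) *: u + cos t *: X.

Lemma curve_der (p u X : V) (t : R) j :
  is_derive (t : R) (1 : R) (fun s => curve p u X s 0 j) (wcur u X t 0 j).
Proof.
have -> : (fun s => curve p u X s 0 j) =
    fun s => (p 0 j + (cos s - 1) * u 0 j) + sin s * X 0 j.
  by apply/funext => s; rewrite /curve !mxE.
have h1 := dB (is_derive_cos t) (dC 1 t).
have h2 := dM h1 (dC (u 0 j) t).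
have h3 := dD (dC (p 0 j) t) h2.
have h4 := dM (is_derive_sin t) (dC (X 0 j) t).
have h5 := dD h3 h4.
refine (is_derive_eq h5 _).
by rewrite /wcur !mxE; ring.
Qed.

Lemma curve0 (p u X : V) : curve p u X 0 = p.
Proof. by rewrite /curve cos0 subrr scale0r addr0 sin0 scale0r addr0. Qed.

Lemma wcur0 (u X : V) : wcur u X 0 = X.
Proof. by rewrite /wcur sin0 oppr0 scale0r add0r cos0 scale1r. Qed.

Lemma crit (C : set V) (p u X : V) :
  (forall y, C y -> Qf y <= Qf p) -> (\forall s \near 0, C (curve p u X s)) ->
  Bf h p (gf p) X - (dn p - h p) * dotv (Dgrad h p) X = 0.
Proof.
move=> hmax hnear.
have hd := fun t => Qder (curve p u X) t (wcur u X t) (curve_der p u X t).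
have hd0' := hd 0; rewrite curve0 wcur0 in hd0'.
have := @fermat R (Qf \o curve p u X) _ _ hd0'.
have H : (forall t, derivable (Qf \o curve p u X) t 1) by move=> t; case: (hd t).
move=> /(_ H) /(_ _) => H2.
have Hn : \forall t \near 0, (Qf \o curve p u X) t <= (Qf \o curve p u X) 0.
  by apply: filterS hnear => s Cs /=; rewrite curve0; exact: hmax.
have /eqP := H2 Hn.
rewrite mulf_eq0 => /orP[|/eqP //].
by rewrite pnatr_eq0.
Qed.

Lemma crit_bc (C : set V) (p u X : V) :
  (forall s, C (curve p u X s)) ->
  (forall y, C y -> dotv (ev + co *: nuv y) (Dgrad h y) - co * h y = 0) ->
  Bf h p (ev + co *: nuv p) X = 0.
Proof.
move=> hC hbc.
have := bcder (curve p u X) 0 (wcur u X 0) (curve_der p u X 0).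
rewrite curve0 wcur0.
have -> : (fun s => dotv (ev + co *: nuv (curve p u X s)) (Dgrad h (curve p u X s))
    - co * h (curve p u X s)) = fun _ => 0.
  by apply/funext => s; apply: hbc.
move=> H; rewrite -(@derive_val _ _ _ _ _ _ _ H).
exact: derive_cst.
Qed.

End QD.


Unset Implicit Arguments.

Section Geo.
Variables (R : realType) (n : nat) (theta : R) (h : 'rV[R]_n.+1 -> R).
Local Notation V := 'rV[R]_n.+1.
Local Notation E := (@Ebasis R n).
Local Notation co := (cos theta).
Local Notation nuv := (@nu R n theta).
Local Notation ev := (@evec R n).
Local Notation gfh := (gf R n theta h).
Local Notation Qh := (Qf R n theta h).
Local Notation dnh := (dn R n theta h).

Lemma dot3 (a b c : R) (p q r : V) :
  dotv (a *: p + b *: q + c *: r) (a *: p + b *: q + c *: r) =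
  a ^+ 2 * dotv p p + b ^+ 2 * dotv q q + c ^+ 2 * dotv r r
  + 2 * a * b * dotv p q + 2 * a * c * dotv p r + 2 * b * c * dotv q r.
Proof.
rewrite !dotvDl !dotvDr !dotvZl !dotvZr (dotvC q p) (dotvC r p) (dotvC r q).
ring.
Qed.

Lemma sgrad_gf (y : V) : sgrad theta h y = gfh y.
Proof. by rewrite /sgrad tprojE. Qed.

Lemma nu_ev (y : V) : dotv ev (nuv y) = - y 0 ord_max - co.
Proof.
rewrite dotvC dotv_evec /nu !mxE !eqxx /=.
by rewrite mulrN1 opprK opprD.
Qed.

Lemma gf_nu (y : V) : dotv (nuv y) (nuv y) = 1 -> dotv (gfh y) (nuv y) = 0.
Proof. by move=> H; rewrite /gf dotvBl dotvZl H mulr1 /dn subrr. Qed.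

Lemma gf_sq (y : V) : dotv (nuv y) (nuv y) = 1 ->
  dotv (gfh y) (gfh y) + h y ^+ 2 = Qh y.
Proof.
move=> H; rewrite /gf /Qf !dotvBl !dotvBr !dotvZl !dotvZr H (dotvC (nuv y)) -/(dnh y).
ring.
Qed.

Lemma cap_nu (y : V) : capC theta y -> dotv (nuv y) (nuv y) = 1.
Proof. by move=> [_ H]; apply: enorm1. Qed.

Lemma cD (T : topologicalType) (f g : T -> R) :
  continuous f -> continuous g -> continuous (fun y => f y + g y).
Proof. by move=> hf hg y; exact: (continuousD (hf y) (hg y)). Qed.

Lemma cB (T : topologicalType) (f g : T -> R) :
  continuous f -> continuous g -> continuous (fun y => f y - g y).
Proof. by move=> hf hg y; exact: (continuousB (hf y) (hg y)). Qed.

Lemma cM (T : topologicalType) (f g : T -> R) :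
  continuous f -> continuous g -> continuous (fun y => f y * g y).
Proof. by move=> hf hg y; exact: (continuousM (hf y) (hg y)). Qed.

Lemma cC (T : topologicalType) (c : R) : continuous (fun _ : T => c).
Proof. exact: cst_continuous. Qed.

Lemma cX j : continuous (fun y : V => y 0 j).
Proof. exact: coord_continuous. Qed.

Lemma dotv_cont (f : V -> V) : (forall j, continuous (fun y => f y 0 j)) ->
  continuous (fun y => dotv (f y) (f y)).
Proof.
move=> hf; have -> : (fun y => dotv (f y) (f y)) = fun y => \sum_i f y 0 i * f y 0 i.
  by apply/funext => y; rewrite dotvE.
by apply: (@cont_sum R V n.+1 (fun i y => f y 0 i * f y 0 i)) => i; apply: cM.
Qed.

Lemma Qcont : continuous h -> (forall j, continuous ('D_(E j) h)) -> continuous Qh.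
Proof.
move=> hc0 hc1.
have -> : Qh = fun y =>
    (\sum_i 'D_(E i) h y * 'D_(E i) h y)
    - (\sum_i 'D_(E i) h y * (y 0 i - co * ev 0 i)) *
      (\sum_i 'D_(E i) h y * (y 0 i - co * ev 0 i))
    + h y * h y.
  apply/funext => y; rewrite /Qf /dn !dotvE !expr2.
  by congr (_ - (_ * _) + _); apply: eq_bigr => i _; rewrite !mxE.
have hs : continuous (fun y : V => \sum_i 'D_(E i) h y * (y 0 i - co * ev 0 i)).
  apply: (@cont_sum R V n.+1 (fun i y => 'D_(E i) h y * (y 0 i - co * ev 0 i))) => i.
  by apply: cM => //; apply: cB; [exact: cX | exact: cC].
apply: cD; last exact: cM.
apply: cB; last exact: cM.
by apply: (@cont_sum R V n.+1 (fun i y => 'D_(E i) h y * 'D_(E i) h y)) => i; apply: cM.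
Qed.

Lemma coord_sq_le (u : V) i : u 0 i ^+ 2 <= dotv u u.
Proof.
rewrite dotvE (bigD1 i) //= -expr2 lerDl sumr_ge0 // => j _.
by rewrite -expr2 sqr_ge0.
Qed.

Lemma cap_compact : compact (@capC R n theta).
Proof.
have -> : @capC R n theta = [set y : V | 0 <= y 0 ord_max] `&`
    [set y : V | dotv (y - co *: ev) (y - co *: ev) = 1].
  apply/seteqP; split => y [h1 h2]; split => //; first exact: enorm1.
  by rewrite /enorm h2 sqrtr1.
apply: bounded_closed_compact.
  exists 2; split => // M hM y [_ hy] /=.
  apply: le_trans (ltW hM); apply: norm_le_coord => // j.
  have -> : y 0 j = (y - co *: ev) 0 j + co * ev 0 j by rewrite !mxE subrK.
  apply: le_trans (ler_normD _ _) _.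
  rewrite -[2]/(1 + 1) lerD //.
    have := coord_sq_le (y - co *: ev) j; rewrite hy => H.
    by rewrite ler_norml; apply/andP; split; nra.
  rewrite normrM evecE normrN; case: (j == ord_max); rewrite ?normr1 ?normr0 ?mulr1 ?mulr0 //.
  by rewrite ler_norml cos_le1 cos_geN1.
apply: closedI.
  by have := (continuous_closedP (fun y : V => y 0 ord_max)).1 (cX ord_max) _ (@closed_ge R 0).
have hc : continuous (fun y : V => dotv (y - co *: ev) (y - co *: ev)).
  apply: dotv_cont => j.
  have -> : (fun y : V => (y - co *: ev) 0 j) = fun y => y 0 j - co * ev 0 j.
    by apply/funext => y; rewrite !mxE.
  by apply: cB; [exact: cX | exact: cC].
by have := (continuous_closedP _).1 hc _ (@closed_eq R 1).
Qed.

Lemma bc_transform (y : V) : 0 < sin theta -> @bdryC R n theta y ->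
  dotv (conormal theta y) (sgrad theta h y) = cot theta * h y ->
  dotv (ev + co *: nuv y) (Dgrad h y) - co * h y = 0.
Proof.
move=> s0 [y0 hy] H.
have hnu : dotv (nuv y) (nuv y) = 1 by apply: enorm1.
have hev : dotv ev (nuv y) = - co by rewrite nu_ev y0 oppr0 sub0r.
have hw : ev *m tproj theta y = ev + co *: nuv y by rewrite tprojE hev scaleNr opprK.
have hmn : dotv (ev + co *: nuv y) (nuv y) = 0.
  by rewrite dotvDl dotvZl hev hnu mulr1 addNr.
have hmm : dotv (ev + co *: nuv y) (ev + co *: nuv y) = sin theta ^+ 2.
  rewrite dotvDr !dotvZr hmn mulr0 addr0 dotvDl dotvZl dotv_evec_evec dotvC hev.
  have := cos2Dsin2 theta; nra.
have hen : enorm (ev + co *: nuv y) = sin theta.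
  by rewrite /enorm hmm sqrtr_sqr ger0_norm // ltW.
move: H; rewrite /conormal hw hen dotvZl sgrad_gf /gf dotvBr dotvZr hmn mulr0 subr0.
rewrite /cot => H.
have -> : dotv (ev + co *: nuv y) (Dgrad h y) =
   sin theta * ((sin theta)^-1 * dotv (ev + co *: nuv y) (Dgrad h y)).
  by rewrite mulrA mulfV ?mul1r // gt_eqF.
rewrite H; field.
by rewrite gt_eqF.
Qed.

End Geo.


Unset Implicit Arguments.

Section Main.
Variables (R : realType) (n : nat) (theta : R) (h : 'rV[R]_n.+1 -> R).
Local Notation V := 'rV[R]_n.+1.
Local Notation E := (@Ebasis R n).
Local Notation co := (cos theta).
Local Notation nuv := (@nu R n theta).
Local Notation ev := (@evec R n).
Local Notation gfh := (gf R n theta h).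
Local Notation Qh := (Qf R n theta h).
Local Notation dnh := (dn R n theta h).
Local Notation cap := (@capC R n theta).
Local Notation bdry := (@bdryC R n theta).
Hypothesis hc0 : continuous h.
Hypothesis hc1 : forall j, continuous ('D_(E j) h).
Hypothesis hd0 : forall y j, derivable h y (E j).
Hypothesis hc2 : forall i j, continuous ('D_(E j) ('D_(E i) h)).
Hypothesis hd1 : forall i y j, derivable ('D_(E i) h) y (E j).
Hypothesis hadm : admissible theta h.
Local Notation critH := (crit R n theta h hc0 hc1 hd0 hc2 hd1).
Local Notation critB := (crit_bc R n theta h hc0 hc1 hd0 hc2 hd1).

Lemma normalize (g : V) : g != 0 -> exists k : R, 0 < k /\ dotv (k *: g) (k *: g) = 1.
Proof.
move=> g0; have hp : 0 < dotv g g.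
  rewrite lt_neqAle dotv_ge0 andbT eq_sym; apply/negP => /eqP /dotv_eq0 H.
  by rewrite H eqxx in g0.
exists (Num.sqrt (dotv g g))^-1; split; first by rewrite invr_gt0 sqrtr_gt0.
rewrite dotvZl dotvZr mulrA -expr2 exprVn sqr_sqrtr ?ltW // mulVf //.
by rewrite gt_eqF.
Qed.

Lemma adm_contra (x0 g : V) : cap x0 -> dotv g (nuv x0) = 0 ->
  Bf h x0 g g - (dnh x0 - h x0) * dotv g g = 0 -> g = 0.
Proof.
move=> cx gt H; apply/eqP; apply/negP => /negP gn.
have := hadm x0 cx g gt gn; rewrite AmatE //.
by move: H; rewrite /dn => ->; rewrite ltxx.
Qed.

Lemma scale_eq0 (k a : R) : 0 < k -> k * a = 0 -> a = 0.
Proof. by move=> k0 /eqP; rewrite mulf_eq0 gt_eqF //= => /eqP. Qed.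

Lemma interior_case (x0 : V) : cap x0 -> 0 < x0 0 ord_max ->
  (forall y, cap y -> Qh y <= Qh x0) -> gfh x0 = 0.
Proof.
move=> cx pos hmax.
have hnu := cap_nu R n theta x0 cx.
set g := gfh x0.
have gt : dotv g (nuv x0) = 0 := gf_nu R n theta h x0 hnu.
case: (eqVneq g 0) => // gn.
have [k [k0 hk]] := normalize g gn.
set X := k *: g.
have hXnu : dotv X (nuv x0) = 0 by rewrite dotvZl gt mulr0.
have sph : forall s, enorm (curve R n x0 (nuv x0) X s - co *: ev) = 1.
  move=> s; rewrite /enorm.
  have -> : curve R n x0 (nuv x0) X s - co *: ev = cos s *: nuv x0 + sin s *: X + 0 *: X.
    by apply/rowP => j; rewrite /curve /nu !mxE; ring.
  rewrite dot3 hnu hk (dotvC (nuv x0) X) hXnu; have := cos2Dsin2 s.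
  by rewrite expr0n /= !mul0r !mulr0 !mulr1 !addr0 => ->; rewrite sqrtr1.
have hnear : \forall s \near 0, cap (curve R n x0 (nuv x0) X s).
  pose f := fun s => curve R n x0 (nuv x0) X s 0 ord_max.
  have hd : derivable f 0 1 by case: (curve_der R n x0 (nuv x0) X 0 ord_max).
  have hcf : {for 0, continuous f}.
    exact/differentiable_continuous/derivable1_diffP.
  have hf0 : f 0 = x0 0 ord_max by rewrite /f curve0.
  have hcf' : (f @ (0 : R) --> x0 0 ord_max)%classic.
    by rewrite -hf0; exact: hcf.
  have := cvgr_gt (x0 0 ord_max) hcf' 0 pos.
  move=> /(_ _) /nbhs_ballP [r r0 H]; apply/nbhs_ballP; exists r => // s /H fs.
  by split; [exact: ltW | exact: sph].
have := critH cap x0 (nuv x0) X hmax hnear.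
have hG : dotv (Dgrad h x0) X = dotv g X.
  by rewrite /g /gf dotvBl dotvZl (dotvC (nuv x0)) hXnu mulr0 subr0.
rewrite hG /X BfZr dotvZr => H.
have H' : Bf h x0 g g - (dnh x0 - h x0) * dotv g g = 0.
  by apply: (scale_eq0 k) => //; rewrite -H; ring.
by move: gn; rewrite (adm_contra x0 g cx gt H') eqxx.
Qed.

Lemma boundary_case (x0 : V) : 0 < sin theta -> cap x0 -> x0 0 ord_max = 0 ->
  (forall y, cap y -> Qh y <= Qh x0) ->
  (forall y, bdry y -> dotv (ev + co *: nuv y) (Dgrad h y) - co * h y = 0) ->
  Qh x0 = (1 + cot theta ^+ 2) * h x0 ^+ 2.
Proof.
move=> s0 cx x0n hmax hbc.
have hnu := cap_nu R n theta x0 cx.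
have bx : bdry x0 by split => //; case: cx.
set g := gfh x0; set m := ev + co *: nuv x0; set st := sin theta.
have st0 : st != 0 by rewrite gt_eqF.
have gt : dotv g (nuv x0) = 0 := gf_nu R n theta h x0 hnu.
have hev : dotv ev (nuv x0) = - co by rewrite nu_ev x0n oppr0 sub0r.
have hmn : dotv m (nuv x0) = 0 by rewrite dotvDl dotvZl hev hnu mulr1 addNr.
have hmm : dotv m m = st ^+ 2.
  rewrite dotvDr !dotvZr hmn mulr0 addr0 dotvDl dotvZl dotv_evec_evec dotvC hev.
  have := cos2Dsin2 theta; rewrite -/st; nra.
have hbc0 : dotv m (Dgrad h x0) = co * h x0.
  by apply/eqP; rewrite -subr_eq0; apply/eqP; apply: hbc.
have hgm : dotv g m = co * h x0.
  by rewrite /g /gf dotvC dotvBr dotvZr hmn mulr0 subr0 hbc0.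
set al := dotv g m / st ^+ 2.
set gT := g - al *: m.
have hgTm : dotv gT m = 0.
  rewrite /gT dotvBl dotvZl hmm /al; field.
  exact: st0.
have hgTnu : dotv gT (nuv x0) = 0 by rewrite /gT dotvBl dotvZl hmn gt mulr0 subrr.
have hgTev : dotv gT ev = 0.
  by move: hgTm; rewrite /m dotvDr dotvZr hgTnu mulr0 addr0.
have hgeq : g = gT + al *: m by rewrite /gT subrK.
case: (eqVneq gT 0) => [gT0 | gn].
  rewrite -(gf_sq R n theta h x0 hnu) -/g hgeq gT0 add0r dotvZl dotvZr hmm.
  rewrite /al hgm /cot -/st; field.
  by rewrite st0.
exfalso.
have [k [k0 hk]] := normalize gT gn.
set X := k *: gT.
have hXdef : X = k *: gT by [].
clearbody X.
have hXnu : dotv X (nuv x0) = 0 by rewrite hXdef dotvZl hgTnu mulr0.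
have hXev : dotv X ev = 0 by rewrite hXdef dotvZl hgTev mulr0.
have hXm : dotv X m = 0 by rewrite hXdef dotvZl hgTm mulr0.
rewrite -hXdef in hk.
have hx0 : x0 = nuv x0 + co *: ev by apply/rowP => j; rewrite /nu !mxE; ring.
have hx0ev : dotv x0 ev = 0 by rewrite dotv_evec x0n oppr0.
have hx0X : dotv x0 X = 0.
  by rewrite hx0 dotvDl dotvZl (dotvC (nuv x0)) hXnu (dotvC ev) hXev mulr0 addr0.
have hx0x0 : dotv x0 x0 = st ^+ 2.
  have hx0' : 1 *: nuv x0 + co *: ev + 0 *: ev = x0.
    by apply/rowP => j; rewrite /nu !mxE; ring.
  rewrite -[in LHS]hx0' dot3 hnu dotv_evec_evec (dotvC (nuv x0)) hev.
  have := cos2Dsin2 theta; rewrite -/st; nra.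
have inb : forall s, bdry (curve R n x0 x0 (st *: X) s).
  move=> s; split.
    have hXn : X 0 ord_max = 0 by move: hXev; rewrite dotv_evec => /eqP; rewrite oppr_eq0 => /eqP.
    by rewrite /curve !mxE x0n hXn; ring.
  rewrite /enorm.
  have -> : curve R n x0 x0 (st *: X) s - co *: ev =
      cos s *: x0 + (sin s * st) *: X + (- co) *: ev.
    by apply/rowP => j; rewrite /curve !mxE; ring.
  rewrite dot3 hx0x0 hk hx0X hx0ev dotv_evec_evec hXev.
  have := cos2Dsin2 s; have := cos2Dsin2 theta; rewrite -/st => H1 H2.
  have -> : cos s ^+ 2 * st ^+ 2 + (sin s * st) ^+ 2 * 1 + (- co) ^+ 2 * 1 +
     2 * cos s * (sin s * st) * 0 + 2 * cos s * - co * 0 + 2 * (sin s * st) * - co * 0 = 1.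
    by rewrite !mulr0 !addr0 !mulr1 exprMn sqrrN -mulrDl H2 mul1r addrC.
  by rewrite sqrtr1.
have hB := critB bdry x0 x0 (st *: X) inb hbc.
have hnear : \forall s \near 0, cap (curve R n x0 x0 (st *: X) s).
  apply/nbhs_ballP; exists 1; first exact: ltr01.
  move=> s _; have [b1 b2] := inb s; split => //; by rewrite b1.
have hcr := critH cap x0 x0 (st *: X) hmax hnear.
move: hcr; rewrite -/g -/m in hB *.
have hG : dotv (Dgrad h x0) (st *: X) = dotv gT (st *: X).
  rewrite dotvZr dotvZr; congr (_ * _).
  rewrite (_ : Dgrad h x0 = g + dnh x0 *: nuv x0); last by rewrite /g /gf subrK.
  by rewrite dotvDl dotvZl (dotvC (nuv x0)) hXnu mulr0 addr0 hgeq dotvDl dotvZl (dotvC m) hXm mulr0 addr0.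
rewrite hG {1}hgeq BfDl BfZl hB mulr0 addr0 hXdef scalerA BfZr dotvZr => H.
have H' : Bf h x0 gT gT - (dnh x0 - h x0) * dotv gT gT = 0.
  by apply: (scale_eq0 (st * k)); [exact: mulr_gt0 | rewrite -H; ring].
by move: gn; rewrite (adm_contra x0 gT cx hgTnu H') eqxx.
Qed.

End Main.


Unset Implicit Arguments.

Theorem lemma3p3 (R : realType) (n k : nat) (theta : R)
  (f h : 'rV[R]_n.+1 -> R) :
  0 < theta < pi ->
  (1 <= k)%N -> (k <= n - 1)%N ->
  smooth f -> (forall x, @capC R n theta x -> 0 < f x) ->
  smooth h -> (forall x, @capC R n theta x -> 0 < h x) ->
  admissible theta h ->
  (forall x, @capC R n theta x ->
     sigma_m n (Amat theta h x) / sigma_m (n - k) (Amat theta h x) = (f x)^-1) ->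
  (forall x, @bdryC R n theta x ->
     dotv (conormal theta x) (sgrad theta h x) = cot theta * h x) ->
  forall x, @capC R n theta x ->
    enorm (sgrad theta h x) <=
      Num.sqrt (1 + cot theta ^+ 2) * sup [set `|h y| | y in @capC R n theta].
Proof.
move=> hth _ _ _ _ hs _ hadm _ hbc x cx.
have hc0 : continuous h := (hs [::]).1.
have hc1 : forall j, continuous ('D_(@Ebasis R n j) h) := fun j => (hs [:: @Ebasis R n j]).1.
have hd0 : forall y j, derivable h y (@Ebasis R n j) := fun y j => (hs [::]).2 (@Ebasis R n j) y.
have hc2 : forall i j, continuous ('D_(@Ebasis R n j) ('D_(@Ebasis R n i) h)) :=
  fun i j => (hs [:: @Ebasis R n j; @Ebasis R n i]).1.
have hd1 : forall i y j, derivable ('D_(@Ebasis R n i) h) y (@Ebasis R n j) :=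
  fun i y j => (hs [:: @Ebasis R n i]).2 (@Ebasis R n j) y.
have s0 : 0 < sin theta by apply: sin_gt0_pi.
have hbc' : forall y, @bdryC R n theta y ->
    dotv (@evec R n + cos theta *: nu theta y) (Dgrad h y) - cos theta * h y = 0.
  by move=> y yb; apply: bc_transform => //; apply: hbc.
have [x0 x0in hmax] := @EVT_max_rV R n.+1 (Qf R n theta h) (@capC R n theta)
  (ex_intro _ x cx) (cap_compact R n theta)
  (continuous_subspaceT (Qcont R n theta h hc0 hc1)).
have cx0 : @capC R n theta x0 by rewrite inE in x0in.
have hmax' : forall y, @capC R n theta y -> Qf R n theta h y <= Qf R n theta h x0.
  by move=> y hy; apply: hmax; rewrite inE.
set M := (1 + cot theta ^+ 2) * h x0 ^+ 2.
have hQ : Qf R n theta h x0 <= M.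
  have [pos|z] : 0 < x0 0 ord_max \/ x0 0 ord_max = 0.
    by case: cx0 => + _; rewrite le_eqVlt => /orP[/eqP <-|]; [right|left].
    have g0 := interior_case R n theta h hc0 hc1 hd0 hc2 hd1 hadm x0 cx0 pos hmax'.
    rewrite -(gf_sq R n theta h x0 (cap_nu R n theta x0 cx0)) g0 dotv0l add0r /M.
    by rewrite mulrDl mul1r lerDl mulr_ge0 // sqr_ge0.
  by rewrite (boundary_case R n theta h hc0 hc1 hd0 hc2 hd1 hadm x0 s0 cx0 z hmax' hbc').
have key : forall y, @capC R n theta y ->
    dotv (sgrad theta h y) (sgrad theta h y) + h y ^+ 2 <= M.
  move=> y cy; rewrite sgrad_gf (gf_sq R n theta h y (cap_nu R n theta y cy)).
  exact: le_trans (hmax' y cy) hQ.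
set S := [set `|h y| | y in @capC R n theta].
have hS : has_sup S.
  split; first by exists `|h x0|; exists x0.
  exists (Num.sqrt M) => z [y cy <-].
  rewrite -sqrtr_sqr; apply: ler_wsqrtr.
  apply: le_trans (key y cy); rewrite lerDr; exact: dotv_ge0.
have hx0S : `|h x0| <= sup S by apply: sup_upper_bound => //; exists x0.
have h1 : enorm (sgrad theta h x) <= Num.sqrt M.
  apply: ler_wsqrtr; apply: le_trans (key x cx); rewrite lerDl; exact: sqr_ge0.
apply: le_trans h1 _.
have c0 : 0 <= 1 + cot theta ^+ 2 by rewrite addr_ge0 // sqr_ge0.
rewrite /M sqrtrM // sqrtr_sqr.
by apply: ler_wpM2l => //; exact: sqrtr_ge0.
Qed.
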